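(* Let $P_3$ be the path on $3$ vertices with endpoints $u,v$, let $q\in\mathbb{R}$, and let \[ H = \begin{bmatrix} 0&1&0\\ 1&q&1\\ 0&1&0\end{bmatrix}, \] i.e. the adjacency matrix plus the potential $\mathrm{diag}(0,q,0)$. Then there is perfect state transfer from $u$ to $v$ (for the Hamiltonian $H$) if and only if there exist integers $k$ and $\ell$ of opposite parity such that \[ (k^2-\ell^2)q^2 = 8\ell^2. \] When this is the case, perfect state transfer occurs at time $t = \frac{2\pi k}{\sqrt{q^2+8}}$.
   Context: With $U(t) = e^{itH}$, perfect state transfer from $u$ to $v$ occurs at time $T$ if $|U(T)_{u,v}|=1$, and ''perfect state transfer from $u$ to $v$'' means this happens for some $T$. *)

(* Defs.v *)
From HB Require Import structures.
From mathcomp Require Import all_boot all_order all_algebra.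
From mathcomp Require Import all_classical all_reals.
From mathcomp Require Import topology normedtype sequences.
From mathcomp Require Import complex.
Set Implicit Arguments. Unset Strict Implicit. Unset Printing Implicit Defensive.
Import Order.TTheory GRing.Theory Num.Theory numFieldNormedType.Exports.
Local Open Scope ring_scope.
Local Open Scope complex_scope.

(* The transition matrix U(t) = e^{itH} for a real symmetric (here: real)
   matrix H, defined entrywise through the exponential series
     e^{itH} = sum_n (i t)^n / n! H^n.
   Since H and t are real, (i t)^n is real for n even ((-1)^(n/2) t^n) and
   purely imaginary for n odd (i (-1)^((n-1)/2) t^n); so the real part of the
   (a,b)-entry is the series of even terms and the imaginary part the series
   of odd terms. *)
Definition expitH_re (R : realType) (n : nat) (H : 'M[R]_n.+1) (t : R)
    (a b : 'I_n.+1) : R :=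
  limn (fun N => \sum_(0 <= k < N) ((-1) ^+ k * t ^+ (k.*2) / ((k.*2)`!)%:R
                     * (H ^+ (k.*2)) a b)).

Definition expitH_im (R : realType) (n : nat) (H : 'M[R]_n.+1) (t : R)
    (a b : 'I_n.+1) : R :=
  limn (fun N => \sum_(0 <= k < N) ((-1) ^+ k * t ^+ (k.*2.+1) / ((k.*2.+1)`!)%:R
                     * (H ^+ (k.*2.+1)) a b)).

Definition U (R : realType) (n : nat) (H : 'M[R]_n.+1) (t : R)
    (a b : 'I_n.+1) : R[i] :=
  (expitH_re H t a b) +i* (expitH_im H t a b).

Definition pst_at (R : realType) (n : nat) (H : 'M[R]_n.+1) (a b : 'I_n.+1)
    (T : R) : Prop :=
  `| U H T a b | = 1.

Definition pst (R : realType) (n : nat) (H : 'M[R]_n.+1) (a b : 'I_n.+1) : Prop :=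
  exists T : R, pst_at H a b T.

(* H = A(P_3) + diag(0,q,0); vertices 0 - 1 - 2, endpoints u = 0, v = 2 *)
Definition HP3 (R : realType) (q : R) : 'M[R]_3 :=
  \matrix_(i < 3, j < 3)
    (if (i == 1 :> nat) && (j == 1 :> nat) then q
     else if ((i == 1 :> nat) && (j != 1 :> nat)) || ((i != 1 :> nat) && (j == 1 :> nat))
          then 1 else 0).

Definition P3u : 'I_3 := @Ordinal 3 0 isT.
Definition P3v : 'I_3 := @Ordinal 3 2 isT.

(* Main.v *)
Require Import Defs.
From HB Require Import structures.
From mathcomp Require Import all_boot all_order all_algebra.
From mathcomp Require Import all_classical all_reals.
From mathcomp Require Import topology normedtype sequences trigo.
From mathcomp Require Import complex.
From mathcomp Require Import ring lra zify.
Import Order.TTheory GRing.Theory Num.Theory numFieldNormedType.Exports.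
Local Open Scope ring_scope.

Definition P3m : 'I_3 := @Ordinal 3 1 isT.

Lemma HP3E (R : realType) (q : R) (i j : 'I_3) : HP3 q i j =
  if (i == 1 :> nat) && (j == 1 :> nat) then q
     else if ((i == 1 :> nat) && (j != 1 :> nat)) || ((i != 1 :> nat) && (j == 1 :> nat))
          then 1 else 0.
Proof. by rewrite mxE. Qed.

Lemma mulE (R : realType) (A B : 'M[R]_3) i j :
  (A * B) i j = A i P3u * B P3u j + A i P3m * B P3m j + A i P3v * B P3v j.
Proof.
rewrite [LHS]mxE !big_ord_recr big_ord0 /= add0r.
have e1 : widen_ord (leqnSn 2) (widen_ord (leqnSn 1) ord_max) = P3u by apply/val_inj.
have e2 : widen_ord (leqnSn 2) ord_max = P3m by apply/val_inj.
have e3 : ord_max = P3v by apply/val_inj.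
by rewrite e1 e2 e3.
Qed.

Lemma powrec (R : realType) (q L : R) n : L ^+ 2 = q * L + 2 ->
  L ^+ n.+2 = q * L ^+ n.+1 + 2 * L ^+ n.
Proof. by move=> h; rewrite -addn2 exprD h exprSr; ring. Qed.

Lemma Hpow (R : realType) (q a b L1 L2 : R) n :
  L1 ^+ 2 = q * L1 + 2 -> L2 ^+ 2 = q * L2 + 2 ->
  a + b = 1/2 -> a * L1 + b * L2 = 0 ->
  let H := HP3 q in
  (H ^+ n) P3u P3v = a * L1 ^+ n + b * L2 ^+ n - (n == 0)%:R / 2 /\
  (H ^+ n) P3m P3v = a * L1 ^+ n.+1 + b * L2 ^+ n.+1 /\
  (H ^+ n) P3v P3v = a * L1 ^+ n + b * L2 ^+ n + (n == 0)%:R / 2.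
Proof.
move=> h1 h2 hab hab2 H; elim: n => [|n [IH1 [IH2 IH3]]].
  rewrite expr0 !mxE /= !expr0 !expr1 !mulr1 hab hab2; by split; [|split]; field.
rewrite (exprS H n) !mulE IH1 IH2 IH3 !mxE /= (powrec _ _ _ n h1) (powrec _ _ _ n h2).
by split; [|split]; field.
Qed.

Lemma term_re (R : realType) (q a b L1 L2 t : R) k :
  L1 ^+ 2 = q * L1 + 2 -> L2 ^+ 2 = q * L2 + 2 ->
  a + b = 1/2 -> a * L1 + b * L2 = 0 ->
  (-1) ^+ k * t ^+ (k.*2) / ((k.*2)`!)%:R * (HP3 q ^+ (k.*2)) P3u P3v =
  a * cos_coeff' (t * L1) k + b * cos_coeff' (t * L2) k - (k == 0)%:R / 2.
Proof.
move=> h1 h2 hab hab2; rewrite (Hpow _ _ _ _ _ _ (k.*2) h1 h2 hab hab2).1 /cos_coeff' !exprMn.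
case: k => [|k] /=.
  rewrite /exprz !expr0 /= !mulr1 !divr1 !mul1r; ring.
rewrite /exprz mul0r subr0; ring.
Qed.

Lemma term_im (R : realType) (q a b L1 L2 t : R) k :
  L1 ^+ 2 = q * L1 + 2 -> L2 ^+ 2 = q * L2 + 2 ->
  a + b = 1/2 -> a * L1 + b * L2 = 0 ->
  (-1) ^+ k * t ^+ (k.*2.+1) / ((k.*2.+1)`!)%:R * (HP3 q ^+ (k.*2.+1)) P3u P3v =
  a * sin_coeff' (t * L1) k + b * sin_coeff' (t * L2) k.
Proof.
move=> h1 h2 hab hab2; rewrite (Hpow _ _ _ _ _ _ (k.*2.+1) h1 h2 hab hab2).1 /sin_coeff' !exprMn.
rewrite /exprz /= mul0r subr0; ring.
Qed.

Lemma re_lim (R : realType) (q a b L1 L2 t : R) :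
  L1 ^+ 2 = q * L1 + 2 -> L2 ^+ 2 = q * L2 + 2 ->
  a + b = 1/2 -> a * L1 + b * L2 = 0 ->
  expitH_re (HP3 q) t P3u P3v = -1/2 + a * cos (t * L1) + b * cos (t * L2).
Proof.
move=> h1 h2 hab hab2; rewrite /expitH_re.
apply: cvg_lim => //.
rewrite -cvg_shiftS /=.
have E : forall N, \sum_(0 <= k < N.+1) ((-1) ^+ k * t ^+ (k.*2) / ((k.*2)`!)%:R
                     * (HP3 q ^+ (k.*2)) P3u P3v) =
   -1/2 + a * series (cos_coeff' (t * L1)) N.+1 + b * series (cos_coeff' (t * L2)) N.+1.
  elim => [|N IH].
    rewrite /series /= !big_nat1 (term_re _ _ _ _ _ _ t _ h1 h2 hab hab2) /=; ring.
  rewrite /series /= in IH *.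
  rewrite !(big_nat_recr N.+1) //= IH (term_re _ _ _ _ _ _ t _ h1 h2 hab hab2) /=; ring.
rewrite (funext E).
apply: cvgD; first apply: cvgD; first exact: cvg_cst.
  by apply: cvgM; [exact: cvg_cst|]; have := @cvg_cos_coeff' _ (t * L1); rewrite -cvg_shiftS.
by apply: cvgM; [exact: cvg_cst|]; have := @cvg_cos_coeff' _ (t * L2); rewrite -cvg_shiftS.
Qed.

Lemma im_lim (R : realType) (q a b L1 L2 t : R) :
  L1 ^+ 2 = q * L1 + 2 -> L2 ^+ 2 = q * L2 + 2 ->
  a + b = 1/2 -> a * L1 + b * L2 = 0 ->
  expitH_im (HP3 q) t P3u P3v = a * sin (t * L1) + b * sin (t * L2).
Proof.
move=> h1 h2 hab hab2; rewrite /expitH_im.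
apply: cvg_lim => //.
have E : forall N, \sum_(0 <= k < N) ((-1) ^+ k * t ^+ (k.*2.+1) / ((k.*2.+1)`!)%:R
                     * (HP3 q ^+ (k.*2.+1)) P3u P3v) =
   a * series (sin_coeff' (t * L1)) N + b * series (sin_coeff' (t * L2)) N.
  move=> N; rewrite /series /=.
  under eq_bigr do rewrite (term_im _ _ _ _ _ _ t _ h1 h2 hab hab2).
  by rewrite big_split /= -!mulr_sumr.
rewrite (funext E).
apply: cvgD.
  by apply: cvgM; [exact: cvg_cst| exact: (@cvg_sin_coeff' _ (t * L1))].
by apply: cvgM; [exact: cvg_cst| exact: (@cvg_sin_coeff' _ (t * L2))].
Qed.

Lemma cos_per (R : realType) (x : R) (m : int) : cos (x + 2 * pi * m%:~R) = cos x.
Proof.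
case: m => n.
  by rewrite -pmulrn mulr_natr mulr_natl (periodicn (@cosD2pi R)).
rewrite NegzE intrN mulrN -pmulrn mulr_natr mulr_natl.
by rewrite -[in RHS](subrK (pi *+ 2 *+ n.+1) x) (periodicn (@cosD2pi R)).
Qed.

Lemma sin_per (R : realType) (x : R) (m : int) : sin (x + 2 * pi * m%:~R) = sin x.
Proof.
case: m => n.
  by rewrite -pmulrn mulr_natr mulr_natl (periodicn (@sinD2pi R)).
rewrite NegzE intrN mulrN -pmulrn mulr_natr mulr_natl.
by rewrite -[in RHS](subrK (pi *+ 2 *+ n.+1) x) (periodicn (@sinD2pi R)).
Qed.

Lemma cos_eq1 (R : realType) (x : R) : cos x = 1 -> exists m : int, x = 2 * pi * m%:~R.
Proof.
move=> hx.
have pi0 := @pi_gt0 R.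
set m := Num.floor (x / (2 * pi)).
have /andP[hm1 hm2] := Num.Theory.floor_itv (x / (2 * pi)).
rewrite -/m in hm1 hm2.
set r := x - 2 * pi * m%:~R.
have h2pi : 0 < 2 * pi :> R by lra.
have hpi2 : 2 * pi != 0 :> R by rewrite gt_eqF.
have e : x / (2 * pi) * (2 * pi) = x by rewrite divfK.
have A : m%:~R * (2 * pi) <= x by rewrite -[leRHS]e ler_wpM2r // ltW.
have B : x < (m%:~R + 1) * (2 * pi).
  by rewrite -[ltLHS]e ltr_pM2r // -[1]/(1%:~R) -intrD.
have hr0 : 0 <= r by rewrite /r subr_ge0 mulrC.
have hr1 : r < 2 * pi by rewrite /r; rewrite mulrDl mul1r (mulrC _ (2 * pi)) in B; lra.
have hcr : cos r = 1 by rewrite -hx -(cos_per _ r m) /r subrK.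
exists m.
suff : r = 0 by rewrite /r => /eqP; rewrite subr_eq0 => /eqP.
have [hrp|hrp] := lerP r pi.
  apply: (@cos_inj R); rewrite ?in_itv /= ?hr0 ?hrp ?lexx ?(ltW pi0) //.
  by rewrite cos0.
exfalso.
have : 2 * pi - r = 0.
  apply: (@cos_inj R); rewrite ?in_itv /= ?lexx ?(ltW pi0) //.
  - apply/andP; split; lra.
  - by rewrite cos0 -cosN opprB -(cos_per _ _ 1) /= mulr1 subrK.
move=> ?; lra.
Qed.

Lemma cos_eqN1 (R : realType) (x : R) : cos x = -1 ->
  exists m : int, x = (2 * m%:~R + 1) * pi.
Proof.
move=> hx; have : cos (x + pi) = 1 by rewrite cosDpi hx opprK.
case/cos_eq1 => m hm; exists (m - 1).
rewrite intrD /=; apply: (addIr pi); rewrite hm; ring.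
Qed.

Lemma cos_odd (R : realType) (m : int) : cos ((2 * m%:~R + 1) * pi) = -1 :> R.
Proof.
rewrite mulrDl mul1r addrC (mulrC _ pi) mulrA (mulrC pi) cos_per; exact: cospi.
Qed.

Lemma int_par (x : int) : exists m : int, x = 2 * m + (odd `|x|%N : nat)%:Z.
Proof.
case: x => n.
  exists (n./2)%:Z; have := odd_double_half n; rewrite /=; lia.
exists (- ((n.+1)./2 + odd n.+1)%N%:Z); have := odd_double_half n.+1.
rewrite NegzE /=; lia.
Qed.

Lemma opp_par (k l : int) : odd `|k|%N != odd `|l|%N ->
  exists M N : int, k + l = 2 * M + 1 /\ l - k = 2 * N + 1.
Proof.
have [a ha] := int_par k; have [b hb] := int_par l.
case: (odd `|k|%N) ha => ha; case: (odd `|l|%N) hb => hb //= _.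
  exists (a + b), (b - a - 1); lia.
exists (a + b), (b - a); lia.
Qed.

Lemma par_opp (k l m : int) : k + l = 2 * m + 1 -> odd `|k|%N != odd `|l|%N.
Proof.
have [a ha] := int_par k; have [b hb] := int_par l.
case: (odd `|k|%N) ha => ha; case: (odd `|l|%N) hb => hb //=; lia.
Qed.

Lemma normU1 (R : realType) (x y : R) : `|(x +i* y)%C| = 1 <-> x ^+ 2 + y ^+ 2 = 1.
Proof.
have h0 : 0 <= x ^+ 2 + y ^+ 2 by rewrite addr_ge0 // sqr_ge0.
rewrite normc_def /=; split.
  case=> h.
  by rewrite -(sqr_sqrtr h0) h expr1n.
by move=> ->; rewrite sqrtr1.
Qed.

Lemma alg (R : realFieldType) (a b c1 c2 s1 s2 : R) : 0 < a -> 0 < b -> a + b = 1/2 ->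
  c1 ^+ 2 + s1 ^+ 2 = 1 -> c2 ^+ 2 + s2 ^+ 2 = 1 -> c1 * c2 + s1 * s2 <= 1 ->
  -1 <= c1 -> -1 <= c2 ->
  (-1/2 + a * c1 + b * c2) ^+ 2 + (a * s1 + b * s2) ^+ 2 = 1 -> c1 = -1 /\ c2 = -1.
Proof.
move=> ha hb hab e1 e2 hd hc1 hc2 hX.
have E : (-1/2 + a * c1 + b * c2) ^+ 2 + (a * s1 + b * s2) ^+ 2 - 1 =
  a ^+ 2 * (c1 ^+ 2 + s1 ^+ 2 - 1) + b ^+ 2 * (c2 ^+ 2 + s2 ^+ 2 - 1)
  + ((a + b) ^+ 2 + (a + b) - 3/4)
  - (a * (1 + c1) + b * (1 + c2) + 2 * (a * b) * (1 - (c1 * c2 + s1 * s2))).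
  by field.
have T1 : 0 <= a * (1 + c1) by rewrite mulr_ge0 //; lra.
have T2 : 0 <= b * (1 + c2) by rewrite mulr_ge0 //; lra.
have T3 : 0 <= 2 * (a * b) * (1 - (c1 * c2 + s1 * s2)).
  by rewrite !mulr_ge0 //; lra.
have E' : (1/2) ^+ 2 + 1/2 - 3/4 = 0 :> R by field.
rewrite hX e1 e2 hab E' in E.
have Z1 : a * (1 + c1) = 0 by lra.
have Z2 : b * (1 + c2) = 0 by lra.
move: Z1 Z2 => /eqP; rewrite mulf_eq0 gt_eqF //= => /eqP Z1 /eqP; rewrite mulf_eq0 gt_eqF //= => /eqP Z2.
split; lra.
Qed.

Lemma key (R : realType) (q t : R) :
  pst_at (HP3 q) P3u P3v t <->
  cos (t * ((q + Num.sqrt (q ^+ 2 + 8)) / 2)) = -1 /\ cos (t * ((q - Num.sqrt (q ^+ 2 + 8)) / 2)) = -1.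
Proof.
set s := Num.sqrt (q ^+ 2 + 8).
have hs0 : 0 <= q ^+ 2 + 8 by rewrite addr_ge0 // sqr_ge0.
have hs : s ^+ 2 = q ^+ 2 + 8 by rewrite sqr_sqrtr.
have s0' : 0 <= s by rewrite sqrtr_ge0.
have s0 : 0 < s by nra.
set L1 := (q + s) / 2; set L2 := (q - s) / 2.
have hL1 : 0 < L1 by rewrite /L1; nra.
have hL2 : L2 < 0 by rewrite /L2; nra.
have h1 : L1 ^+ 2 = q * L1 + 2 by rewrite /L1; nra.
have h2 : L2 ^+ 2 = q * L2 + 2 by rewrite /L2; nra.
set a := - L2 / (2 * s); set b := L1 / (2 * s).
have sn0 : s != 0 by rewrite gt_eqF.
have hab : a + b = 1/2 by rewrite /a /b /L1 /L2; field.
have hab2 : a * L1 + b * L2 = 0 by rewrite /a /b; field.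
have ha : 0 < a by rewrite /a divr_gt0 //; lra.
have hb : 0 < b by rewrite /b divr_gt0 //; lra.
rewrite /pst_at /U (re_lim _ _ _ _ _ _ t h1 h2 hab hab2) (im_lim _ _ _ _ _ _ t h1 h2 hab hab2).
rewrite normU1; split.
  apply: alg => //; rewrite ?cos2Dsin2 ?cos_geN1 //.
  by rewrite -cosB cos_le1.
case=> c1 c2.
rewrite (cos1sin0 (_ : `|cos (t * L1)| = 1)); last by rewrite c1 normrN normr1.
rewrite (cos1sin0 (_ : `|cos (t * L2)| = 1)); last by rewrite c2 normrN normr1.
rewrite c1 c2 !mulr0 addr0 expr0n /= addr0.
have -> : -1/2 + a * -1 + b * -1 = -1 by lra.
by rewrite sqrrN expr1n.
Qed.

Lemma intR_eq (R : realType) (k l m : int) : k + l = 2 * m + 1 ->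
  k%:~R + l%:~R = 2 * m%:~R + 1 :> R.
Proof. by move=> /(congr1 (fun z : int => z%:~R : R)); rewrite /= !intrD intrM. Qed.

Lemma part2 (R : realType) (q : R) (k l : int) : odd `|k|%N != odd `|l|%N ->
     (k%:~R ^+ 2 - l%:~R ^+ 2) * q ^+ 2 = 8 * l%:~R ^+ 2 ->
     pst_at (HP3 q) P3u P3v (2 * pi * k%:~R / Num.sqrt (q ^+ 2 + 8)).
Proof.
move=> hp he; apply/key.
set s := Num.sqrt (q ^+ 2 + 8).
have hs0 : 0 <= q ^+ 2 + 8 by rewrite addr_ge0 // sqr_ge0.
have hs : s ^+ 2 = q ^+ 2 + 8 by rewrite sqr_sqrtr.
have s0' : 0 <= s by rewrite sqrtr_ge0.
have s0 : 0 < s by nra.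
have sn0 : s != 0 by rewrite gt_eqF.
set K : R := k%:~R; set Lr : R := l%:~R.
set x := K * q / s.
have hxs : x * s = K * q by rewrite /x divfK.
have hx2 : (x - Lr) * (x + Lr) = 0.
  apply: (mulIf (_ : s ^+ 2 != 0)); first by rewrite expf_neq0.
  rewrite mul0r.
  have -> : (x - Lr) * (x + Lr) * s ^+ 2 = (x * s) ^+ 2 - Lr ^+ 2 * s ^+ 2 by ring.
  rewrite hxs hs; nra.
have [l' [hl'x hl'p]] : exists l' : int, x = l'%:~R /\ odd `|l'|%N = odd `|l|%N.
  move/eqP: hx2; rewrite mulf_eq0 => /orP[/eqP h|/eqP h].
    by exists l; split => //; lra.
  by exists (- l); rewrite abszN intrN; split => //; lra.
rewrite -hl'p in hp.
have [M [N [hM hN]]] := opp_par _ _ hp.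
have hM' := intR_eq R _ _ _ hM.
have hN' := intR_eq R _ _ _ hN; rewrite intrN in hN'.
split.
  have -> : 2 * pi * K / s * ((q + s) / 2) = pi * (K + x) by rewrite /x; field.
  by rewrite hl'x hM' mulrC cos_odd.
have -> : 2 * pi * K / s * ((q - s) / 2) = pi * (x - K) by rewrite /x; field.
by rewrite hl'x hN' mulrC cos_odd.
Qed.

Theorem theorem3 (R : realType) (q : R) :
  (pst (HP3 q) P3u P3v <->
   exists k l : int, odd `|k|%N != odd `|l|%N /\
     (k%:~R ^+ 2 - l%:~R ^+ 2) * q ^+ 2 = 8 * l%:~R ^+ 2)
  /\
  (forall k l : int, odd `|k|%N != odd `|l|%N ->
     (k%:~R ^+ 2 - l%:~R ^+ 2) * q ^+ 2 = 8 * l%:~R ^+ 2 ->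
     pst_at (HP3 q) P3u P3v (2 * pi * k%:~R / Num.sqrt (q ^+ 2 + 8))).
Proof.
split; last exact: part2.
split; last first.
  by case=> k [l [hp he]]; exact: (ex_intro _ _ (part2 _ _ _ _ hp he)).
case=> T /key [c1 c2].
have [m hm] := cos_eqN1 _ _ c1; have [n hn] := cos_eqN1 _ _ c2.
exists (m - n), (m + n + 1); split.
  by apply: (@par_opp _ _ m); ring.
set s := Num.sqrt (q ^+ 2 + 8) in hm hn *.
have hs0 : 0 <= q ^+ 2 + 8 by rewrite addr_ge0 // sqr_ge0.
have hs : s ^+ 2 = q ^+ 2 + 8 by rewrite sqr_sqrtr.
set M : R := m%:~R in hm *; set N : R := n%:~R in hn *.
have -> : (m - n)%:~R = M - N :> R by rewrite intrB.
have -> : (m + n + 1)%:~R = M + N + 1 :> R by rewrite !intrD.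
have K : 2 * pi * (M - N) = T * s.
  have -> : T * s = T * ((q + s) / 2) - T * ((q - s) / 2) by field.
  rewrite hm hn; ring.
have Lq : 2 * pi * (M + N + 1) = T * q.
  have -> : T * q = T * ((q + s) / 2) + T * ((q - s) / 2) by field.
  rewrite hm hn; ring.
apply/eqP; rewrite -subr_eq0; apply/eqP.
apply: (mulfI (_ : pi ^+ 2 != 0)); first by rewrite expf_neq0 // gt_eqF // pi_gt0.
rewrite mulr0.
have -> : pi ^+ 2 * (((M - N) ^+ 2 - (M + N + 1) ^+ 2) * q ^+ 2 - 8 * (M + N + 1) ^+ 2)
  = ((2 * pi * (M - N)) ^+ 2 - (2 * pi * (M + N + 1)) ^+ 2) * q ^+ 2 / 4
    - 2 * (2 * pi * (M + N + 1)) ^+ 2 by field.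
by rewrite K Lq !exprMn hs; field.
Qed.
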